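(* Fix $p<1$ and assume that for every $p<0$ and $t\in[0,T]$, $(b,\Sigma,F)\in\Theta_t$ implies $b^T\Sigma^{-1}b\le2(1-p)^2/(-p)$. Let $c\in\mathfrak A^c_0$ and $(\pi,\theta),(\hat\pi,\hat\theta)\in\mathfrak A^\pi_0\times\Theta$ with $g^{\theta_t}(\pi_t)\ge g^{\hat\theta_t}(\hat\pi_t)$ for all $t\in[0,T]$. Then $G(\pi,c,\theta)\ge G(\hat\pi,c,\hat\theta)$ (i) if $p\le0$; (ii) if $p\in(0,1)$, provided $0\le c_t\le1$, $g^{\theta_t}(\pi_t)\ge0$ and $g^{\hat\theta_t}(\hat\pi_t)\ge0$ for all $t\in[0,T]$.
   Context: Fix $T>0$, $d\ge1$, $\varepsilon\in(0,2]$. Let $\mathbb{S}^d_+$ be the symmetric positive definite $d\times d$ matrices, $\mathcal L$ the Lévy measures on $\mathbb{R}^d$, with $d^\varepsilon_{\mathcal L}(\mu,\nu)=\sup\int f\,d(\tilde\mu-\tilde\nu)$, $\tilde\mu(A)=\int_A(|z|^{2-\varepsilon}\wedge1)\mu(dz)$, sup over bounded continuous $f$ with $\sup_{z\neq\hat z}[|f(z)|\vee|f(z)-f(\hat z)|/|z-\hat z|^{\varepsilon\wedge1}]\le1$. $\mathcal C\subset\mathbb{R}^d\times\mathbb{S}^d_+\times\mathcal L$ is compact for $d_{\mathcal C}=|y-\hat y|\vee\|M-\hat M\|_2\vee d^\varepsilon_{\mathcal L}(\mu,\hat\mu)$; $\Theta:[0,T]\twoheadrightarrow\mathcal C$ is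 a weakly measurable correspondence with closed convex values, and $\Theta$ also denotes the set of Borel $\theta:[0,T]\to\mathcal C$ with $\theta_t\in\Theta_t$. Assume $\mathbf S_t=\bigcup_{(y,M,\mu)\in\Theta_t}\mathrm{supp}(\mu)$ is closed, there is $\kappa_t>0$ with $\{|z|\le\kappa_t^{-1}\}\subseteq\mathrm{Conv}(\mathbf S_t\cup\{0\})\subseteq\{|z|\le\kappa_t\}$, and $|y|\vee\|M\|_2\vee d^\varepsilon_{\mathcal L}(\mu,0)\le\kappa_t$ on $\Theta_t$. Let $U(x)=\log x$ if $p=0$, $x^p/p$ otherwise. $\mathcal O_t=\{x:x^Tz>-1\ \forall z\in\mathbf S_t\}$; $\mathfrak A^\pi_0$ = Borel $\pi:[0,T]\to\mathbb{R}^d$ with $\pi_t\in\mathcal O_t$; $\mathfrak A^c_0$ = Borel $c:[0,T]\to[0,\infty)$. Local kernel: $g^{(y,M,\mu)}(x)=x^Ty-\frac{1-p}2x^TMx+\int(U(1+x^Tz)-U(1)-x^Tz)\mu(dz)$ for $x\in\mathcal O_t,(y,M,\mu)\in\Theta_t$. Global kernel $G(\pi,c,\theta)=\int_0^T\big(\int_0^t(g^{\theta_s}(\pi_s)-c_s)ds+g^{\theta_t}(\pi_t)-c_t+U(c_t)\big)dt$ if $p=0$; $G(\pi,c,\theta)=\int_0^T\exp\big(\int_0^tp(g^{\theta_s}(\pi_s)-c_s)ds\big)\big(g^{\theta_t}(\pi_t)-c_t+U(c_t)\big)dt$ if $p\ne0$. *)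

(* Defs.v *)
From HB Require Import structures.
From mathcomp Require Import all_boot all_order all_algebra.
From mathcomp Require Import all_classical all_reals all_analysis.
Set Implicit Arguments. Unset Strict Implicit. Unset Printing Implicit Defensive.
Import Order.TTheory GRing.Theory Num.Theory.
Import numFieldNormedType.Exports.
Local Open Scope classical_set_scope.
Local Open Scope ring_scope.

Section Defs.
Context {R : realType}.

Definition Rd (d : nat) := g_sigma_algebraType (@open 'rV[R]_d).

Definition dot {d : nat} (x z : 'rV[R]_d) : R := \sum_(i < d) x ord0 i * z ord0 i.
Definition eucl {d : nat} (x : 'rV[R]_d) : R := Num.sqrt (dot x x).

Definition SPD {d : nat} (M : 'M[R]_d) : Prop :=
  M^T = M /\ forall x : 'rV[R]_d, x != 0 -> 0 < dot (x *m M) x.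

Definition opnorm {d : nat} (M : 'M[R]_d) : R :=
  sup [set eucl (x *m M) | x in [set x : 'rV[R]_d | eucl x <= 1]].

Definition triple (d : nat) :=
  ('rV[R]_d * 'M[R]_d * {measure set (Rd d) -> \bar R})%type.

Definition levy {d : nat} (mu : {measure set (Rd d) -> \bar R}) : Prop :=
  mu [set (0 : 'rV[R]_d)] = 0%E /\
  (\int[mu]_z (Num.min (eucl (z : 'rV[R]_d) ^+ 2) 1)%:E < +oo)%E.

(* weight |z|^{2-eps} /\ 1 defining mu~ *)
Definition weight {d : nat} (eps : R) (z : 'rV[R]_d) : R :=
  Num.min (eucl z `^ (2 - eps)) 1.

Definition testfun {d : nat} (eps : R) (f : 'rV[R]_d -> R) : Prop :=
  continuous f /\ (exists M : R, forall z, `|f z| <= M) /\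
  forall z zh : 'rV[R]_d, z != zh ->
    Num.max `|f z| (`|f z - f zh| / (eucl (z - zh) `^ Num.min eps 1)) <= 1.

Definition intw {d : nat} (eps : R) (mu : {measure set (Rd d) -> \bar R})
  (f : 'rV[R]_d -> R) : \bar R :=
  \int[mu]_z ((f z * weight eps z)%:E).

Definition dL {d : nat} (eps : R) (mu nu : {measure set (Rd d) -> \bar R}) : \bar R :=
  ereal_sup [set (intw eps mu f - intw eps nu f)%E | f in [set f | testfun eps f]].

Definition dC {d : nat} (eps : R) (a b : triple d) : \bar R :=
  maxe (maxe (eucl (a.1.1 - b.1.1))%:E (opnorm (a.1.2 - b.1.2))%:E)
       (dL eps a.2 b.2).

Definition inYML {d : nat} (a : triple d) : Prop := SPD a.1.2 /\ levy a.2.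

Definition relopen {d : nat} (eps : R) (C U : set (triple d)) : Prop :=
  U `<=` C /\ forall a, U a -> exists2 r : R, 0 < r &
    [set b | C b /\ (dC eps a b < r%:E)%E] `<=` U.
Definition relclosed {d : nat} (eps : R) (C A : set (triple d)) : Prop :=
  A `<=` C /\ relopen eps C (C `\` A).
Definition relcompact {d : nat} (eps : R) (C : set (triple d)) : Prop :=
  forall (I : Type) (U : I -> set (triple d)),
    (forall i, relopen eps C (U i)) -> C `<=` \bigcup_i U i ->
    exists F : set I, finite_set F /\ C `<=` \bigcup_(i in F) U i.

Definition convex_triples {d : nat} (A : set (triple d)) : Prop :=
  forall a b : triple d, A a -> A b -> forall l : R, 0 <= l <= 1 ->
    exists nu : {measure set (Rd d) -> \bar R},
      (forall B : set (Rd d), measurable B ->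
         nu B = (l%:E * a.2 B + (1 - l)%:E * b.2 B)%E) /\
      A (l *: a.1.1 + (1 - l) *: b.1.1, l *: a.1.2 + (1 - l) *: b.1.2, nu).

Definition supp {d : nat} (mu : {measure set (Rd d) -> \bar R}) : set 'rV[R]_d :=
  [set z | forall U : set 'rV[R]_d, open U -> U z -> (0 < mu U)%E].

Definition conv {d : nat} (A : set 'rV[R]_d) : set 'rV[R]_d :=
  [set x | exists n (a : 'I_n -> 'rV[R]_d) (l : 'I_n -> R),
     (forall i, A (a i)) /\ (forall i, 0 <= l i) /\ \sum_(i < n) l i = 1 /\
     x = \sum_(i < n) l i *: a i].

Definition Sset {d : nat} (Theta : R -> set (triple d)) (t : R) : set 'rV[R]_d :=
  [set z | exists a, Theta t a /\ supp a.2 z].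

Definition Oset {d : nat} (Theta : R -> set (triple d)) (t : R) : set 'rV[R]_d :=
  [set x | forall z, Sset Theta t z -> -1 < dot x z].

Definition standing (T : R) (d : nat) (eps : R) (C : set (triple d))
    (Theta : R -> set (triple d)) : Prop :=
  0 < T /\ (0 < d)%N /\ 0 < eps <= 2 /\
  C `<=` inYML /\ relcompact eps C /\
  (forall t, `[0, T]%classic t ->
     Theta t `<=` C /\ relclosed eps C (Theta t) /\ convex_triples (Theta t)) /\
  (forall U, relopen eps C U ->
     measurable [set t : R | `[0, T]%classic t /\ Theta t `&` U !=set0]) /\
  (forall t, `[0, T]%classic t ->
     closed (Sset Theta t) /\
     exists2 k : R, 0 < k &
       [set z | eucl z <= k^-1] `<=` conv (Sset Theta t `|` [set 0]) /\
       conv (Sset Theta t `|` [set 0]) `<=` [set z | eucl z <= k] /\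
       forall a, Theta t a ->
         (maxe (maxe (eucl a.1.1)%:E (opnorm a.1.2)%:E)
               (dL eps a.2 mzero) <= k%:E)%E).

Definition thetaAdm (T : R) {d : nat} (eps : R) (C : set (triple d))
    (Theta : R -> set (triple d)) (theta : R -> triple d) : Prop :=
  (forall U, relopen eps C U -> measurable (`[0, T]%classic `&` theta @^-1` U)) /\
  (forall t, `[0, T]%classic t -> Theta t (theta t)).

Definition piAdm (T : R) {d : nat} (Theta : R -> set (triple d))
    (pi : R -> Rd d) : Prop :=
  measurable_fun `[0, T] pi /\ (forall t, `[0, T]%classic t -> Oset Theta t (pi t)).

Definition cAdm (T : R) (c : R -> R) : Prop :=
  measurable_fun `[0, T] c /\ (forall t, `[0, T]%classic t -> 0 <= c t).

Definition Ufun (p x : R) : R := if p == 0 then ln x else x `^ p / p.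
Definition UE (p x : R) : \bar R :=
  if 0 < x then (Ufun p x)%:E else if 0 < p then 0%E else -oo%E.

Definition gk (p : R) {d : nat} (a : triple d) (x : 'rV[R]_d) : \bar R :=
  ((dot x a.1.1 - (1 - p) / 2 * dot (x *m a.1.2) x)%:E +
   \int[a.2]_z ((Ufun p (1 + dot x z) - Ufun p 1 - dot x z)%:E))%E.

Definition Gk (p T : R) {d : nat} (pi : R -> Rd d) (c : R -> R)
    (theta : R -> triple d) : \bar R :=
  let gg := fun t => gk p (theta t) (pi t) in
  if p == 0 then
    (\int[lebesgue_measure]_(t in `[0%R, T])
       ((\int[lebesgue_measure]_(s in `[0%R, t]) (gg s - (c s)%:E))
        + gg t - (c t)%:E + UE p (c t)))%E
  else
    (\int[lebesgue_measure]_(t in `[0%R, T])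
       (expeR (\int[lebesgue_measure]_(s in `[0%R, t]) (p%:E * (gg s - (c s)%:E)))
        * (gg t - (c t)%:E + UE p (c t))))%E.

End Defs.

(* Main.v *)
Require Import Defs.
From HB Require Import structures.
From mathcomp Require Import all_boot all_order all_algebra.
From mathcomp Require Import all_classical all_reals all_analysis.
From mathcomp Require Import ring lra measurable_realfun.
Import Order.TTheory GRing.Theory Num.Theory.
Import numFieldNormedType.Exports.
Import HBNNSimple.
Local Open Scope classical_set_scope.
Local Open Scope ring_scope.


Lemma le_integral_any d (T : measurableType d) (R : realType)
  (mu : {measure set T -> \bar R}) (D : set T) (f g : T -> \bar R) :
  (forall x, D x -> (f x <= g x)%E) ->
  (\int[mu]_(x in D) f x <= \int[mu]_(x in D) g x)%E.
Proof.
move=> fg; rewrite (integralE _ D f) (integralE _ D g); apply: leeB.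
- rewrite !ge0_integralE; try by move=> x _; exact: funepos_ge0.
  apply: ereal_sup_le => _ [h hf <-]; exists h => //= x.
  apply: (le_trans (hf x)); rewrite /patch; case: ifP => // /[1!inE] Dx.
  by rewrite !funeposE; apply: le_max2 => //; exact: fg.
- rewrite !ge0_integralE; try by move=> x _; exact: funeneg_ge0.
  apply: ereal_sup_le => _ [h hf <-]; exists h => //= x.
  apply: (le_trans (hf x)); rewrite /patch; case: ifP => // /[1!inE] Dx.
  by rewrite !funenegE; apply: le_max2 => //; rewrite leeN2; exact: fg.
Qed.

Lemma bernoulli_neg (R : realType) (p y : R) : p < 0 -> 0 < y ->
  1 + p * (y - 1) <= y `^ p.
Proof.
move=> p0 y0; rewrite /powR gt_eqF //.
apply: le_trans (expR_ge1Dx _); rewrite lerD2l.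
apply: ler_wnM2l; first exact: ltW.
have := @le_ln1Dx R (y - 1).
have -> : 1 + (y - 1) = y by rewrite addrC subrK.
move=> H; have : ln y <= y - 1 by apply: H; lra.
done.
Qed.



Lemma f_nonpos (R : realType) (p c : R) (g : \bar R) : p < 0 -> 0 <= c ->
  (g <= ((1 - p) / (- p))%:E)%E -> (g - c%:E + UE p c <= 0)%E.
Proof.
move=> p0 c0 gB; rewrite /UE; have [cp|cn] := ltP 0 c; last first.
  by rewrite ltNge (ltW p0) /= addeNy leNye.
rewrite /Ufun (lt_eqF p0).
apply: (le_trans (leeD (leeB gB (lexx _)) (lexx _))).
rewrite -EFinB -EFinD lee_fin.
have hb := @bernoulli_neg R p c p0 cp.
set q := c `^ p in hb *.
have pn : p != 0 by rewrite lt_eqF.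
have e1 : q / p <= (1 + p * (c - 1)) / p by rewrite ler_wnM2r // invr_le0 ltW.
have e2 : (1 + p * (c - 1)) / p = p^-1 + c - 1 by field.
have e3 : (1 - p) / (- p) = 1 - p^-1 by field.
lra.
Qed.

Lemma f_nonneg (R : realType) (p c : R) (g : \bar R) : 0 < p -> p < 1 -> 0 <= c <= 1 ->
  (0 <= g)%E -> (0 <= g - c%:E + UE p c)%E.
Proof.
move=> p0 p1 /andP[c0 c1] g0; rewrite /UE; have [cp|cn] := ltP 0 c; last first.
  have -> : c = 0 by apply/eqP; rewrite eq_le cn c0.
  by rewrite p0 sube0 adde0.
rewrite /Ufun (gt_eqF p0) -addeA -EFinN -EFinD adde_ge0 // lee_fin.
have h1 : c <= c `^ p.
  rewrite /powR gt_eqF // -{1}(lnK cp).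
  rewrite ler_expR -{1}(mul1r (ln c)) ler_wnM2r //; first exact: ln_le0.
  exact: ltW.
have h2 : c `^ p <= c `^ p / p.
  rewrite ler_pdivlMr //; have := @powR_gt0 R c p cp; nra.
lra.
Qed.



Section DotLemmas.
Context {R : realType} {d : nat}.
Implicit Types (x y z : 'rV[R]_d).

Lemma dotC x z : dot x z = dot z x.
Proof. by rewrite /dot; apply: eq_bigr => i _; rewrite mulrC. Qed.

Lemma dotDl x y z : dot (x + y) z = dot x z + dot y z.
Proof. by rewrite /dot -big_split; apply: eq_bigr => i _; rewrite !mxE mulrDl. Qed.

Lemma dotNl x z : dot (- x) z = - dot x z.
Proof. by rewrite /dot -sumrN; apply: eq_bigr => i _; rewrite !mxE mulNr. Qed.

Lemma dotZl (a : R) x z : dot (a *: x) z = a * dot x z.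
Proof. by rewrite /dot mulr_sumr; apply: eq_bigr => i _; rewrite !mxE mulrA. Qed.

Lemma dotBl x y z : dot (x - y) z = dot x z - dot y z.
Proof. by rewrite dotDl dotNl. Qed.

Lemma dotBr x y z : dot z (x - y) = dot z x - dot z y.
Proof. by rewrite dotC dotBl !(dotC z). Qed.

Lemma dotZr (a : R) x z : dot z (a *: x) = a * dot z x.
Proof. by rewrite dotC dotZl dotC. Qed.

Lemma dot0l z : dot 0 z = 0.
Proof. by rewrite /dot big1 // => i _; rewrite mxE mul0r. Qed.

Lemma dotE x z : dot x z = (x *m z^T) ord0 ord0.
Proof. by rewrite /dot mxE; apply: eq_bigr => i _; rewrite mxE. Qed.

Lemma dot_mulmx x y (S : 'M[R]_d) : dot (x *m S) y = dot x (y *m S^T).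
Proof. by rewrite !dotE trmx_mul trmxK mulmxA. Qed.

End DotLemmas.

Lemma SPD_unit (R : realType) d (S : 'M[R]_d) : SPD S -> S \in unitmx.
Proof.
move=> [_ pos]; rewrite unitmxE unitfE; apply/negP => /det0P [v v0 vS].
by have := pos v v0; rewrite vS dot0l ltxx.
Qed.

Lemma SPD_ge0 (R : realType) d (S : 'M[R]_d) v : SPD S -> 0 <= dot (v *m S) v.
Proof.
move=> [_ pos]; have [->|v0] := eqVneq v 0; first by rewrite mul0mx dot0l.
exact/ltW/pos.
Qed.

Lemma quad_bound (R : realType) d (S : 'M[R]_d) (b x : 'rV[R]_d) (Q : R) :
  SPD S -> 0 < Q ->
  dot x b - Q * dot (x *m S) x <= dot (b *m invmx S) b / (4 * Q).
Proof.
move=> hS Q0; have Su := @SPD_unit R d S hS; have [St _] := hS.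
set k := (2 * Q)^-1; set u := k *: (b *m invmx S).
have uS : u *m S = k *: b by rewrite /u -scalemxAl -mulmxA mulVmx // mulmx1.
have h := @SPD_ge0 R d S (x - u) hS.
rewrite mulmxBl dotBl !dotBr in h.
rewrite [dot (x *m S) u]dot_mulmx St uS !dotZl !dotZr in h.
rewrite [dot x b]dotC [dot b (b *m invmx S)]dotC in h *.
have Qk : Q * k = 2^-1 by rewrite /k invfM mulrCA mulfV ?gt_eqF // mulr1.
set A := dot (x *m S) x in h *; set B := dot b x in h *;
set C := dot (b *m invmx S) b in h *.
have -> : C / (4 * Q) = Q * (k * (k * C)) by rewrite /k; field; lra.
have : 0 <= Q * (A - k * B - (k * B - k * (k * C))) by rewrite mulr_ge0 // ltW.
have -> : Q * (A - k * B - (k * B - k * (k * C))) = Q * A - 2 * (Q * k) * B + Q * (k * (k * C)) by ring.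
rewrite Qk; lra.
Qed.



Lemma dot_continuous (R : realType) d (x : 'rV[R]_d) :
  continuous (fun z : 'rV[R]_d => dot x z).
Proof.
suff H : forall s : seq 'I_d,
    continuous (fun z : 'rV[R]_d => \sum_(i <- s) x ord0 i * z ord0 i).
  exact: H.
elim=> [|i s IH].
  have -> : (fun z : 'rV[R]_d => \sum_(i <- [::]) x ord0 i * z ord0 i) = fun=> 0.
    by apply: funext => z; rewrite big_nil.
  exact: cst_continuous.
have -> : (fun z : 'rV[R]_d => \sum_(j <- i :: s) x ord0 j * z ord0 j) =
    (fun z => x ord0 i * z ord0 i + \sum_(j <- s) x ord0 j * z ord0 j).
  by apply: funext => z; rewrite big_cons.
move=> z.
have h1 : {for z, continuous (fun z : 'rV[R]_d => x ord0 i * z ord0 i)}.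
  apply: (@continuousM _ _ (fun=> x ord0 i) (fun z : 'rV[R]_d => z ord0 i)).
    exact: cst_continuous.
  exact: coord_continuous.
exact: (@continuousD _ _ _ (fun z : 'rV[R]_d => x ord0 i * z ord0 i)
  (fun z => \sum_(j <- s) x ord0 j * z ord0 j) z h1 (IH z)).
Qed.

Lemma negl_compact (R : realType) d (mu : {measure set (@Rd R d) -> \bar R})
  (A : set 'rV[R]_d) : compact A ->
  (forall z, A z -> exists U : set 'rV[R]_d, open U /\ U z /\ mu U = 0%E) ->
  mu.-negligible (A : set (@Rd R d)).
Proof.
move=> cA hA.
have [f hf] : {f : 'rV[R]_d -> set 'rV[R]_d &
    forall z, A z -> open (f z) /\ f z z /\ mu (f z) = 0%E}.
  apply: (@choice _ _ (fun z U => A z -> open U /\ U z /\ mu U = 0%E)) => z.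
  have [Az|nAz] := pselect (A z).
    by have [U HU] := hA z Az; exists U.
  by exists set0.
rewrite compact_cover in cA.
have [D' sD cov] := cA _ A f (fun i Ai => (hf i Ai).1)
  (fun z Az => ex_intro2 _ _ z Az (hf z Az).2.1).
suff [M [mM M0 sM]] : mu.-negligible (\big[setU/set0]_(i <- finmap.enum_fset D') f i : set (@Rd R d)).
  exists M; split => // z /cov; rewrite /cover bigcup_fset; exact: sM.
rewrite big_seq.
elim/big_ind : _ => //.
- exact: negligible_set0.
- move=> X Y nX nY; exact: (negligibleU nX nY).
move=> i iD; have Ai : A i by have := sD i iD; rewrite inE.
have [oi [_ m0]] := hf i Ai.
exists (f i); split => //; exact: sub_sigma_algebra.
Qed.

Lemma K_negl (R : realType) d (mu : {measure set (@Rd R d) -> \bar R}) (x : 'rV[R]_d) :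
  (forall z, supp mu z -> -1 < dot x z) ->
  mu.-negligible ([set z : 'rV[R]_d | dot x z <= -1] : set (@Rd R d)).
Proof.
move=> hs; set K := [set z : 'rV[R]_d | dot x z <= -1].
have Kc : closed K.
  exact: ((continuous_closedP _).1 (@dot_continuous R d x) _ (@closed_le R (-1))).
pose box (n : nat) := [set v : 'rV[R]_d | forall i,
   (`[- (n%:R), n%:R]%classic : set R) (v ord0 i)].
have KU : K `<=` \bigcup_n (box n `&` K).
  move=> z Kz; set m := \sum_i `|z ord0 i|.
  exists (Num.truncn m).+1 => //; split => // i.
  have hi : `|z ord0 i| <= m.
    rewrite /m (bigD1 i) //= lerDl; exact: sumr_ge0.
  have := Num.Theory.truncnS_gt m; rewrite /= in_itv /= -ler_norml => hm.
  exact: (le_trans hi (ltW hm)).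
suff [M [mM M0 sM]] : mu.-negligible (\bigcup_n (box n `&` K) : set (@Rd R d)).
  by exists M; split => // z /KU /sM.
apply: negligible_bigcup => n; apply: negl_compact.
  apply: compact_closedI => //.
  rewrite /box; have := @rV_compact R d (fun=> `[- (n%:R), n%:R]%classic).
  move=> H; apply: H => i; exact: segment_compact.
move=> z [_ Kz]; case: (pselect (exists U : set 'rV[R]_d, open U /\ U z /\ mu U = 0%E)) => // nE.
exfalso; have : supp mu z.
  move=> U oU Uz; rewrite lt0e measure_ge0 andbT; apply/eqP => h.
  by apply: nE; exists U.
by move/hs; rewrite ltNge Kz.
Qed.

Lemma integral_le0_negl d (T : measurableType d) (R : realType)
  (mu : {measure set T -> \bar R}) (N : set T) (f : T -> \bar R) :
  mu.-negligible N -> (forall z, ~ N z -> (f z <= 0)%E) -> (\int[mu]_z f z <= 0)%E.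
Proof.
move=> [M [mM M0 NM]] hf.
rewrite integralE; rewrite -[X in (_ <= X)%E](sube0 0).
apply: leeB; last by apply: integral_ge0 => z _; exact: funeneg_ge0.
rewrite ge0_integralE; last by move=> z _; exact: funepos_ge0.
apply: ge_ereal_sup => _ [h hh <-].
rewrite -integralT_nnsfun.
have hM : forall z, ~ M z -> h z = 0.
  move=> z nMz; have := hh z; rewrite patch_setT funeposE.
  have fz : (f z <= 0)%E by apply: hf => /NM.
  rewrite (@maxEle _ _ (f z) 0%E) ?fz //.
  by move=> h0; apply/eqP; rewrite eq_le -lee_fin h0 /=; exact: fun_ge0.
rewrite (eq_integral (((fun z => (h z)%:E) \_ M))); last first.
  move=> z _; rewrite /patch; case: ifP => // /negbT.
  by rewrite notin_setE => nMz; rewrite hM.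
rewrite -integral_mkcond null_set_integral //.
apply/measurable_EFinP; apply: measurable_funTS; exact: measurable_funP.
Qed.

Lemma jump_le0 (R : realType) d (p : R) (mu : {measure set (@Rd R d) -> \bar R})
  (x : 'rV[R]_d) : p < 0 -> (forall z, supp mu z -> -1 < dot x z) ->
  (\int[mu]_z ((Ufun p (1 + dot x z) - Ufun p 1 - dot x z)%:E) <= 0)%E.
Proof.
move=> p0 hs; have := @integral_le0_negl _ _ R mu _ (fun z : @Rd R d => (Ufun p (1 + dot x z) - Ufun p 1 - dot x z)%:E) (@K_negl R d mu x hs).
apply => z nK.
have lt : -1 < dot x z by rewrite ltNge; apply/negP.
rewrite lee_fin /Ufun (lt_eqF p0) powR1.
have y0 : 0 < 1 + dot x z by lra.
have hb := @bernoulli_neg R p _ p0 y0.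
set q := _ `^ p in hb *.
have pn : p != 0 by rewrite lt_eqF.
have e1 : q / p <= (1 + p * (1 + dot x z - 1)) / p.
  by rewrite ler_wnM2r // invr_le0 ltW.
have e2 : (1 + p * (1 + dot x z - 1)) / p = p^-1 + dot x z by field.
rewrite div1r; lra.
Qed.

Lemma gk_bound (R : realType) d (p : R) (a : @triple R d) (x : 'rV[R]_d) :
  p < 0 -> SPD a.1.2 -> dot (a.1.1 *m invmx a.1.2) a.1.1 <= 2 * (1 - p) ^+ 2 / (- p) ->
  (forall z, supp a.2 z -> -1 < dot x z) ->
  (gk p a x <= ((1 - p) / (- p))%:E)%E.
Proof.
move=> p0 hS hC hs; rewrite /gk.
apply: le_trans (leeD (lexx _) (@jump_le0 R d p a.2 x p0 hs)) _.
rewrite adde0 lee_fin.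
have Q0 : 0 < (1 - p) / 2 by lra.
apply: le_trans (@quad_bound R d a.1.2 a.1.1 x _ hS Q0) _.
have pn : p != 0 by rewrite lt_eqF.
have pn1 : 1 - p != 0 by rewrite gt_eqF //; lra.
have -> : dot (a.1.1 *m invmx a.1.2) a.1.1 / (4 * ((1 - p) / 2)) =
  dot (a.1.1 *m invmx a.1.2) a.1.1 * (2 * (1 - p))^-1 by field.
have -> : (1 - p) / - p = (2 * (1 - p) ^+ 2 / (- p)) * (2 * (1 - p))^-1.
  by field; rewrite pn1 pn.
rewrite ler_pM2r; first exact: hC.
rewrite invr_gt0; lra.
Qed.



Lemma lee_nmul_aux (R : realType) (p : R) (u v : \bar R) : p <= 0 -> (u <= v)%E ->
  (p%:E * v <= p%:E * u)%E.
Proof.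
move=> p0 uv; rewrite -(opprK p) EFinN !mulNe leeN2; apply: lee_wpmul2l => //.
by rewrite lee_fin oppr_ge0.
Qed.

Theorem theorem5p1 (R : realType) (T : R) (d : nat) (eps : R)
  (C : set (@triple R d)) (Theta : R -> set (@triple R d)) (p : R) :
  standing T eps C Theta ->
  p < 1 ->
  (p < 0 -> forall t, `[0, T]%classic t ->
     forall (b : 'rV[R]_d) (Sigma : 'M[R]_d) (F : {measure set (@Rd R d) -> \bar R}),
       Theta t (b, Sigma, F) ->
       dot (b *m invmx Sigma) b <= 2 * (1 - p) ^+ 2 / (- p)) ->
  forall (c : R -> R) (pi pih : R -> @Rd R d) (theta thetah : R -> @triple R d),
    cAdm T c ->
    piAdm T Theta pi -> thetaAdm T eps C Theta theta ->
    piAdm T Theta pih -> thetaAdm T eps C Theta thetah ->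
    (forall t, `[0, T]%classic t ->
       (gk p (thetah t) (pih t) <= gk p (theta t) (pi t))%E) ->
    (p <= 0 -> (Gk p T pih c thetah <= Gk p T pi c theta)%E) /\
    (0 < p ->
       (forall t, `[0, T]%classic t ->
          0 <= c t <= 1 /\ (0 <= gk p (theta t) (pi t))%E /\
          (0 <= gk p (thetah t) (pih t))%E) ->
       (Gk p T pih c thetah <= Gk p T pi c theta)%E).
Proof.
move=> hst p1 hb c pi pih theta thetah [_ c0] [_ piO] [_ thT] _ _ hg.
have sub : forall t s, `[0, T]%classic t -> `[0, t]%classic s -> `[0, T]%classic s.
  move=> t s; rewrite /= !in_itv /= => /andP[t0 tT] /andP[s0 st].
  by rewrite s0 (le_trans st tT).
split.
- move=> p0; rewrite /Gk.
  have [pe|pn0] := eqVneq p 0; first subst p.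
    apply: le_integral_any => t tI.
    apply: leeD => //; apply: leeB => //; apply: leeD; last exact: hg.
    apply: le_integral_any => s sI; apply: leeB => //; exact: hg (sub _ _ tI sI).
  have pl0 : p < 0 by rewrite lt_neqAle pn0 p0.
  apply: le_integral_any => t tI.
  set A := (\int[lebesgue_measure]_(s in `[0%R, t]) (p%:E * (gk p (theta s) (pi s) - (c s)%:E)))%E.
  set Ah := (\int[lebesgue_measure]_(s in `[0%R, t]) (p%:E * (gk p (thetah s) (pih s) - (c s)%:E)))%E.
  have AAh : (A <= Ah)%E.
    apply: le_integral_any => s sI.
    apply: lee_nmul_aux; first exact: ltW.
    apply: leeB => //; exact: hg (sub _ _ tI sI).
  have hf : (gk p (theta t) (pi t) - (c t)%:E + UE p (c t) <= 0)%E.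
    apply: f_nonpos => //; first exact: c0.
    have [Tht Thtsupp] : Theta t (theta t) /\ True by split => //; exact: thT.
    case: hst => _ [_ [_ [CY [_ [HTh _]]]]].
    have [ThC _] := HTh t tI.
    have [spd _] := CY _ (ThC _ Tht).
    move: (hb pl0 t tI) Tht spd; case: (theta t) => [[b S] F] /= hbt Tht spd.
    apply: gk_bound => //=; first exact: hbt Tht.
    move=> z zs; apply: (piO t tI); exists (b, S, F); split => //.
  have hfh : (gk p (thetah t) (pih t) - (c t)%:E + UE p (c t) <= 
              gk p (theta t) (pi t) - (c t)%:E + UE p (c t))%E.
    by apply: leeD => //; apply: leeB => //; exact: hg.
  rewrite -[X in (_ <= X)%E]oppeK -[X in (X <= _)%E]oppeK leeN2.
  rewrite -!muleN; apply: lee_pmul.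
  + exact: expeR_ge0.
  + by rewrite oppe_ge0.
  + by rewrite lee_expeR.
  + by rewrite leeN2.
- move=> p0 hyp; rewrite /Gk (gt_eqF p0); apply: le_integral_any => t tI.
  have [hc [hg0 hgh0]] := hyp t tI.
  apply: lee_pmul.
  + exact: expeR_ge0.
  + by apply: f_nonneg.
  + rewrite lee_expeR; apply: le_integral_any => s sI.
    apply: lee_wpmul2l; first by rewrite lee_fin ltW.
    apply: leeB => //; exact: hg (sub _ _ tI sI).
  + by apply: leeD => //; apply: leeB => //; exact: hg.
Qed.
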